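(* Let $(P,\epsilon)$ be a labeled poset. Then $\Phi_\epsilon:\mathcal{A}(\epsilon)\to\mathcal{A}(-\epsilon)$, $\Phi_\epsilon\sigma=\sigma+\delta_\epsilon$, is a bijection if and only if $P$ is dual $\epsilon$-consistent.
   Context: $P$ is a finite poset with $p$ elements, $\omega:P\to\{1,\dots,p\}$ a bijection; write $x\prec y$ if $y$ covers $x$, $E(P)$ the covering pairs, and $\epsilon(x,y)=1$ if $\omega(x)<\omega(y)$, $-1$ otherwise. $-\epsilon$ is defined by $(-\epsilon)(x,y)=-\epsilon(x,y)$ (it is induced by the labeling $p+1-\omega$). For a labeling $\epsilon$, a $(P,\epsilon)$-partition is an order-reversing map $\sigma:P\to\{1,2,\dots\}$ ($x\le y\Rightarrow\sigma(x)\ge\sigma(y)$) with $\sigma(x)>\sigma(y)$ whenever $x\prec y$ and $\epsilon(x,y)=-1$; $\mathcal{A}(\epsilon)$ is the set of $(P,\epsilon)$-partitions. Define $\delta_\epsilon(x)=\max\sum_{i=1}^{\ell}\epsilon(x_{i-1},x_i)$ over all saturated chains $x=x_0\prec x_1\prec\cdots\prec x_\ell$ with $x_\ell$ maximal in $P$. The map $\Phi_\epsilon$ sends $\mathcal{A}(\epsilon)$ injectively into $\mathcal{A}(-\epsilon)$. The dual $(P^*,\epsilon^* )$ has $x<_{P^*}y$ iff $y<_P x$ and $\epsilon^*(y,x)=-\epsilon(x,y)$. A poset $Q$ with labeling $\nu$ is $\nu$-consistent if for each $z$, the sum $\sum\nu(x_{i-1},x_i)$ is the same over all maximal chains $x_0\prec\cdots\prec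 x_n$ of $\{w\le_Q z\}$. $P$ is dual $\epsilon$-consistent if $P^*$ is $\epsilon^*$-consistent. *)

(* Defs.v *)
From mathcomp Require Import all_boot all_order all_algebra.
Set Implicit Arguments. Unset Strict Implicit. Unset Printing Implicit Defensive.
Import Order.TTheory GRing.Theory Num.Theory.
Local Open Scope ring_scope.

Section LabeledPoset.
Variables (T : finType) (le : rel T).

Definition ltP (x y : T) : bool := (x != y) && le x y.

Definition coversIn (S : pred T) (x y : T) : bool :=
  [&& S x, S y, ltP x y & [forall z, S z ==> ~~ (ltP x z && ltP z y)]].

Definition covers (x y : T) : bool := coversIn predT x y.

Definition minimalIn (S : pred T) (x : T) : bool :=
  S x && [forall w, (S w && le w x) ==> (w == x)].
Definition maximalIn (S : pred T) (x : T) : bool :=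
  S x && [forall w, (S w && le x w) ==> (w == x)].

(* sum of a labeling along the chain x = x_0, x_1, ..., x_l (s = [x_1;...;x_l]) *)
Definition chain_sum (eps : T -> T -> int) (x : T) (s : seq T) : int :=
  \sum_(p <- zip (x :: s) s) eps p.1 p.2.

Definition sat_chain_to_max (x : T) (s : seq T) : bool :=
  path covers x s && maximalIn predT (last x s).

Fixpoint seqs_upto (n : nat) : seq (seq T) :=
  if n is n'.+1 then [::] :: [seq y :: s | y <- enum T, s <- seqs_upto n']
  else [:: [::]].

Definition omax (a b : option int) : option int :=
  match a, b with
  | Some a, Some b => Some (Num.max a b)
  | None, b => b
  | a, None => a
  end.

(* delta_eps(x) = max of chain sums over saturated chains from x to a maximal
   element.  Every such chain has length < #|T|, so all of them occur among the
   sequences of length at most #|T|. *)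
Definition delta (eps : T -> T -> int) (x : T) : int :=
  odflt 0 (foldr omax None
    [seq Some (chain_sum eps x s) | s <- seqs_upto #|T| & sat_chain_to_max x s]).

Definition PPartition (eps : T -> T -> int) (sigma : T -> int) : Prop :=
  [/\ forall x, 0 < sigma x,
      forall x y, le x y -> sigma y <= sigma x
    & forall x y, covers x y -> eps x y = -1 -> sigma y < sigma x].

Definition Phi (eps : T -> T -> int) (sigma : T -> int) : T -> int :=
  fun x => sigma x + delta eps x.

Definition maximal_chain_in (S : pred T) (x0 : T) (s : seq T) : bool :=
  [&& minimalIn S x0, path (coversIn S) x0 s & maximalIn S (last x0 s)].

Definition consistent (nu : T -> T -> int) : Prop :=
  forall z x1 s1 x2 s2,
    maximal_chain_in (fun w => le w z) x1 s1 ->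
    maximal_chain_in (fun w => le w z) x2 s2 ->
    chain_sum nu x1 s1 = chain_sum nu x2 s2.

End LabeledPoset.

Definition eps_of (T : Type) (omega : T -> nat) (x y : T) : int :=
  if (omega x < omega y)%N then 1 else -1.

Definition neg_lab (T : Type) (eps : T -> T -> int) : T -> T -> int :=
  fun x y => - eps x y.

Definition dual_lab (T : Type) (eps : T -> T -> int) : T -> T -> int :=
  fun a b => - eps b a.

Definition dual_rel (T : Type) (le : rel T) : rel T := fun x y => le y x.

Definition dual_consistent (T : finType) (le : rel T) (eps : T -> T -> int) : Prop :=
  consistent (dual_rel le) (dual_lab eps).

(* Main.v *)
Require Import Defs.
From mathcomp Require Import all_boot all_order all_algebra.
From mathcomp Require Import zify.
Import GRing.Theory Num.Theory.
Local Open Scope ring_scope.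
Set Implicit Arguments. Unset Strict Implicit.

Lemma measure_ind (A : Type) (m : A -> nat) (P : A -> Prop) :
  (forall a, (forall b, (m b < m a)%N -> P b) -> P a) -> forall a, P a.
Proof.
move=> H a; move: {2}(m a) (leqnn (m a)) => n; elim: n a => [|n IH] a ha;
  apply: H => b hb.
- by have := leq_trans hb ha; rewrite ltn0.
- by apply: IH; rewrite -ltnS (leq_trans hb ha).
Qed.

Arguments measure_ind {A} m {P}.

Section Aux.
Variables (T : finType) (le : rel T).
Hypotheses (leR : reflexive le) (leA : antisymmetric le) (leT : transitive le).

Notation lt := (Defs.ltP le).
Notation cov := (covers le).

Lemma leTr x y z : le x y -> le y z -> le x z.
Proof. move=> h1 h2; exact: (leT h1 h2). Qed.

Lemma leAr x y : le x y -> le y x -> x = y.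
Proof. by move=> h1 h2; apply: leA; rewrite h1 h2. Qed.

Lemma lt_irr x : lt x x = false.
Proof. by rewrite /Defs.ltP eqxx. Qed.

Lemma lt_le x y : lt x y -> le x y.
Proof. by case/andP. Qed.

Lemma lt_trans x y z : lt x y -> lt y z -> lt x z.
Proof.
move=> /andP[nxy lxy] /andP[nyz lyz]; apply/andP; split; last exact: leTr lxy lyz.
apply/eqP => exz; subst z.
by move: nxy; rewrite (leAr lxy lyz) eqxx.
Qed.

Lemma cov_lt x y : cov x y -> lt x y.
Proof. by case/and4P. Qed.

Lemma cov_le x y : cov x y -> le x y.
Proof. by move/cov_lt/lt_le. Qed.

Lemma cov_nob x y z : cov x y -> lt x z -> lt z y -> False.
Proof.
case/and4P=> _ _ _ /forallP /(_ z) /implyP H h1 h2.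
by move: (H isT); rewrite h1 h2.
Qed.

Lemma covI x y : lt x y -> (forall z, lt x z -> lt z y -> False) -> cov x y.
Proof.
move=> hxy H; apply/and4P; split => //; apply/forallP => z; apply/implyP => _.
by apply/negP => /andP[h1 h2]; apply: (H z).
Qed.

Definition up x := #|[pred v | lt x v]|.
Definition dn x := #|[pred v | lt v x]|.

Lemma up_lt x y : lt x y -> (up y < up x)%N.
Proof.
move=> hxy; apply: proper_card; apply/properP; split.
- by apply/subsetP => v; rewrite !inE => hyv; exact: lt_trans hxy hyv.
- by exists y; rewrite !inE ?lt_irr.
Qed.

Lemma dn_lt x y : lt x y -> (dn x < dn y)%N.
Proof.
move=> hxy; apply: proper_card; apply/properP; split.
- by apply/subsetP => v; rewrite !inE => hyv; exact: lt_trans hyv hxy.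
- by exists x; rewrite !inE ?lt_irr.
Qed.

Lemma exists_cov x w : lt x w -> exists2 y, cov x y & le y w.
Proof.
move: w; apply: (measure_ind dn) => w IH hxw.
case: (boolP [forall z, ~~ (lt x z && lt z w)]) => H.
- exists w => //; apply: covI => // z h1 h2.
  by move/forallP: H => /(_ z); rewrite h1 h2.
- move/forallPn: H => [z]; rewrite negbK => /andP[hxz hzw].
  have [y h1 h2] := IH z (dn_lt hzw) hxz.
  by exists y => //; apply: leTr h2 (lt_le hzw).
Qed.

Lemma nonmax_cov x : ~~ maximalIn le predT x -> exists y, cov x y.
Proof.
rewrite /maximalIn /= => /forallPn [w]; rewrite negb_imply => /andP[/= haw nwa].
have hlt : lt x w by rewrite /Defs.ltP haw eq_sym nwa.
by have [y h _] := exists_cov hlt; exists y.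
Qed.

Lemma max_nocov m y : maximalIn le predT m -> cov m y -> False.
Proof.
move=> /andP[_ /forallP /(_ y) /implyP H] /cov_lt /andP[nmy lmy].
by move: (H lmy); rewrite eq_sym (negbTE nmy).
Qed.

Lemma mono_of_covers (f : T -> int) :
  (forall a b, cov a b -> f b <= f a) -> forall a b, le a b -> f b <= f a.
Proof.
move=> Hc a; move: a; apply: (measure_ind up) => a IH b hab.
case: (eqVneq a b) => [->|nab]; first by [].
have hlt : lt a b by rewrite /Defs.ltP nab hab.
have [c hac hcb] := exists_cov hlt.
have h1 := IH c (up_lt (cov_lt hac)) b hcb.
have h2 := Hc _ _ hac.
lia.
Qed.

Lemma pos_of_covers (f : T -> int) :
  (forall a b, cov a b -> f b <= f a) ->
  (forall m, maximalIn le predT m -> 0 < f m) -> forall a, 0 < f a.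
Proof.
move=> Hc Hm a; move: a; apply: (measure_ind up) => a IH.
case: (boolP (maximalIn le predT a)) => [/Hm //|/nonmax_cov [c hac]].
have h1 := IH c (up_lt (cov_lt hac)).
have h2 := Hc _ _ hac.
lia.
Qed.

Lemma chain_sum_nil (e : T -> T -> int) (x : T) : chain_sum e x [::] = 0.
Proof. by rewrite /chain_sum big_nil. Qed.

Lemma chain_sum_cons (e : T -> T -> int) (x y : T) s : chain_sum e x (y :: s) = e x y + chain_sum e y s.
Proof. by rewrite /chain_sum /= big_cons. Qed.

Lemma chain_sum_rcons (e : T -> T -> int) (x : T) s y :
  chain_sum e x (rcons s y) = chain_sum e x s + e (last x s) y.
Proof.
elim: s x => [|z s IH] x /=.
  by rewrite chain_sum_cons !chain_sum_nil add0r addr0.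
by rewrite !chain_sum_cons IH addrA.
Qed.

Lemma last_rev_belast (x : T) s : last (last x s) (rev (belast x s)) = x.
Proof. by case: s => [|z s] //=; rewrite rev_cons last_rcons. Qed.

Lemma chain_sum_rev (e : T -> T -> int) (x : T) s :
  chain_sum (dual_lab e) (last x s) (rev (belast x s)) = - chain_sum e x s.
Proof.
elim: s x => [|y s IH] x /=; first by rewrite !chain_sum_nil oppr0.
rewrite rev_cons chain_sum_rcons IH last_rev_belast /dual_lab chain_sum_cons.
by rewrite opprD addrC.
Qed.

Lemma mem_seqs n (s : seq T) : (size s <= n)%N -> s \in seqs_upto T n.
Proof.
elim: n s => [|n IH] [|y s] //=; rewrite ?inE ?eqxx // ltnS => hs.
apply/orP; right; apply: (allpairs_f (fun y s => y :: s)).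
  by rewrite mem_enum.
exact: IH.
Qed.

Lemma foldr_omax_const (c : int) L :
  all (pred1 (Some c)) L -> L != [::] -> foldr omax None L = Some c.
Proof.
elim: L => [//|a L IH] /= /andP[/eqP-> hL] _.
case: L IH hL => [|b L'] IH hL //=.
have -> : omax b (foldr omax None L') = Some c by exact: IH.
by rewrite /= /Num.max; case: ifP.
Qed.

Lemma delta_const (eps : T -> T -> int) (x : T) c :
  (exists2 s0, (size s0 <= #|T|)%N & sat_chain_to_max le x s0) ->
  (forall s, sat_chain_to_max le x s -> chain_sum eps x s = c) ->
  delta le eps x = c.
Proof.
move=> [s0 hs0 hsat] H; rewrite /delta (@foldr_omax_const c) //.
  apply/allP => o /mapP [s]; rewrite mem_filter => /andP[hs _] ->.
  by rewrite /= H.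
have : s0 \in [seq s <- seqs_upto T #|T| | sat_chain_to_max le x s].
  by rewrite mem_filter hsat mem_seqs.
by case: [seq s <- _ | _].
Qed.

Lemma delta_max (eps : T -> T -> int) (m : T) : maximalIn le predT m -> delta le eps m = 0.
Proof.
move=> hm; apply: delta_const.
  by exists [::] => //; rewrite /sat_chain_to_max /= hm.
case=> [|y s]; first by rewrite chain_sum_nil.
by rewrite /sat_chain_to_max /= => /andP[/andP[h _] _]; case: (max_nocov hm h).
Qed.

Lemma exists_chain x : exists2 s, sat_chain_to_max le x s & (size s <= up x)%N.
Proof.
move: x; apply: (measure_ind up) => x IH.
case: (boolP (maximalIn le predT x)) => [hm|/nonmax_cov [c hxc]].
  by exists [::] => //; rewrite /sat_chain_to_max /= hm.
have hup := up_lt (cov_lt hxc).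
have [s /andP[hp hm] hs] := IH c hup.
exists (c :: s); first by rewrite /sat_chain_to_max /= hxc hp hm.
by rewrite /= (leq_ltn_trans hs hup).
Qed.

Lemma path_le_last x0 s : path cov x0 s -> le x0 (last x0 s).
Proof.
elim: s x0 => [|y s IH] x0 /=; first by rewrite leR.
by case/andP => h hp; apply: leTr (cov_le h) (IH _ hp).
Qed.

Lemma path_up x x0 s : le x x0 -> path cov x0 s ->
  path (fun a b => [&& le x a, le x b & cov a b]) x0 s.
Proof.
elim: s x0 => [|y s IH] x0 //= hx /andP[h hp].
have hy := leTr hx (cov_le h).
by rewrite hx hy h /= IH.
Qed.

Lemma sat_dual x s : sat_chain_to_max le x s ->
  maximal_chain_in (dual_rel le) (fun w => dual_rel le w x)
     (last x s) (rev (belast x s)).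
Proof.
case/andP => hp hm; apply/and3P; split.
- apply/andP; split; first by rewrite /dual_rel path_le_last.
  apply/forallP => w; apply/implyP => /andP[_ /= hw].
  by move: hm => /andP[_ /forallP /(_ w) /implyP]; apply.
- rewrite rev_path; apply: sub_path (path_up (leR x) hp) => a b /and3P[ha hb h].
  have /andP[nab lab] := cov_lt h.
  apply/and4P; split => //.
  + by rewrite /Defs.ltP eq_sym nab.
  + apply/forallP => z; apply/implyP => /= hz.
    apply/negP => /andP[/andP[nbz lzb] /andP[nza laz]].
    rewrite /dual_rel in lzb laz.
    apply: (cov_nob (z:=z) h); first by rewrite /Defs.ltP laz andbT eq_sym.
    by rewrite /Defs.ltP lzb andbT eq_sym.
- rewrite last_rev_belast; apply/andP; split; first by rewrite /dual_rel leR.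
  apply/forallP => w; apply/implyP => /andP[h1 h2]; apply/eqP.
  by apply: leA; rewrite /dual_rel in h1 h2; rewrite h1 h2.
Qed.

Lemma D_of_consistent (eps : T -> T -> int) : dual_consistent le eps ->
  forall x y, cov x y -> delta le eps x = eps x y + delta le eps y.
Proof.
move=> Hc.
have Heq x s1 s2 : sat_chain_to_max le x s1 -> sat_chain_to_max le x s2 ->
    chain_sum eps x s1 = chain_sum eps x s2.
  move=> h1 h2; have := Hc x _ _ _ _ (sat_dual h1) (sat_dual h2).
  by rewrite !chain_sum_rev => /eqP; rewrite eqr_opp => /eqP.
move=> x y hxy.
have [s hs hsz] := exists_chain y.
have hup := up_lt (cov_lt hxy).
have hupT : (up x <= #|T|)%N by exact: max_card.
have hsat : sat_chain_to_max le x (y :: s).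
  by move: hs; rewrite /sat_chain_to_max /= hxy.
rewrite (@delta_const eps y (chain_sum eps y s)); last 2 first.
- by exists s => //; apply: leq_trans hsz (leq_trans (ltnW hup) hupT).
- by move=> s' h; apply: Heq.
rewrite -chain_sum_cons; apply: delta_const.
- by exists (y :: s) => //=; apply: leq_trans hupT; apply: leq_ltn_trans hsz hup.
- by move=> s' h; apply: Heq.
Qed.

Lemma dual_cov z a b :
  coversIn (dual_rel le) (fun w => dual_rel le w z) a b -> cov b a.
Proof.
case/and4P => /= hza hzb /andP[nab lba] /forallP H.
apply: covI; first by rewrite /Defs.ltP eq_sym nab.
move=> c /andP[nbc lbc] /andP[nca lca].
have := H c; rewrite /dual_rel /Defs.ltP (leTr hzb lbc) /= (eq_sym a c) nca lca.
by rewrite eq_sym nbc lbc.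
Qed.

Lemma consistent_of_D (eps : T -> T -> int) :
  (forall x y, cov x y -> delta le eps x = eps x y + delta le eps y) ->
  dual_consistent le eps.
Proof.
move=> D.
have tele z x1 s1 :
    path (coversIn (dual_rel le) (fun w => dual_rel le w z)) x1 s1 ->
    chain_sum (dual_lab eps) x1 s1 = delta le eps x1 - delta le eps (last x1 s1).
  elim: s1 x1 => [|y s IH] x1 /=; first by rewrite chain_sum_nil subrr.
  case/andP => h hp; rewrite chain_sum_cons IH // /dual_lab (D _ _ (dual_cov h)).
  lia.
have key z x1 s1 :
    maximal_chain_in (dual_rel le) (fun w => dual_rel le w z) x1 s1 ->
    chain_sum (dual_lab eps) x1 s1 = - delta le eps z.
  case/and3P => /andP[hz1 /forallP Hmin] hp /andP[hzl /forallP Hmax].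
  rewrite (tele z) //.
  have -> : last x1 s1 = z.
    have := Hmax z; rewrite /dual_rel /= leR /=.
    by move: hzl; rewrite /dual_rel => -> /= /eqP.
  rewrite delta_max ?sub0r //.
  apply/andP; split => //; apply/forallP => w; apply/implyP => /= hw.
  apply: (implyP (Hmin w)); rewrite /dual_rel /= hw andbT.
  by rewrite /dual_rel in hz1; apply: leTr hz1 hw.
by move=> z x1 s1 x2 s2 h1 h2; rewrite (key _ _ _ h1) (key _ _ _ h2).
Qed.

Definition fw (x y w : T) : int :=
  (#|[pred u | le w u || (le w y && le x u)]|)%:Z.
Definition sw (x y w : T) : int := 2 * fw x y w + (if le w x then 1 else 0).

Section W.
Variables (x y : T).
Hypothesis hxy : cov x y.

Lemma fw_pos w : 0 < fw x y w.
Proof.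
rewrite /fw ltz_nat (cardD1 w) inE /= leR /=; lia.
Qed.

Lemma fw_mono w v : le w v -> fw x y v <= fw x y w.
Proof.
move=> hwv; rewrite /fw lez_nat; apply: subset_leq_card; apply/subsetP => u.
rewrite !inE => /orP[h|/andP[h1 h2]].
  by rewrite (leTr hwv h).
by rewrite (leTr hwv h1) h2 orbT.
Qed.

Lemma fw_strict w v : lt w v -> ~~ ((w == x) && (v == y)) -> fw x y v < fw x y w.
Proof.
move=> hwv hne; rewrite /fw ltz_nat; apply: proper_card; apply/properP; split.
  apply/subsetP => u; rewrite !inE => /orP[h|/andP[h1 h2]].
    by rewrite (leTr (lt_le hwv) h).
  by rewrite (leTr (lt_le hwv) h1) h2 orbT.
exists w; rewrite !inE ?leR //.
apply/negP => /orP[h|/andP[hvy hxw]].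
  by have e := leAr (lt_le hwv) h; subst v; rewrite lt_irr in hwv.
have lwy := leTr (lt_le hwv) hvy.
case: (eqVneq w x) => [ewx|nwx].
- subst w; case: (eqVneq v y) => [evy|nvy]; first by rewrite evy !eqxx in hne.
  by apply: (cov_nob hxy (z := v)); rewrite // /Defs.ltP nvy.
- case: (eqVneq w y) => [ewy|nwy].
    subst w; have evy := leAr hvy (lt_le hwv); subst v.
    by rewrite lt_irr in hwv.
  by apply: (cov_nob hxy (z := w)); rewrite /Defs.ltP ?nwy // eq_sym nwx.
Qed.

Lemma fw_eq : fw x y x = fw x y y.
Proof.
rewrite /fw; congr (_%:Z); apply: eq_card => u; rewrite !inE leR.
have lxy := cov_le hxy.
case hxu: (le x u); case hyu: (le y u); rewrite ?lxy //=.
by move: hxu; rewrite (leTr lxy hyu).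
Qed.

Lemma sw_pos w : 0 < sw x y w.
Proof. have := fw_pos w; rewrite /sw; case: (le w x); lia. Qed.

Lemma sw_xy : sw x y x = sw x y y + 1.
Proof.
rewrite /sw fw_eq leR.
have /andP[nxy lxy] := cov_lt hxy.
have -> : le y x = false.
  by apply/negP => h; move: nxy; rewrite (leAr lxy h) eqxx.
lia.
Qed.

Lemma sw_strict w v : lt w v -> sw x y v < sw x y w.
Proof.
move=> hwv; case: (boolP ((w == x) && (v == y))) => [/andP[/eqP-> /eqP->]|hne].
  by rewrite sw_xy; lia.
have := fw_strict hwv hne; rewrite /sw; case: (le w x); case: (le v x); lia.
Qed.

Lemma fw_PP (lab : T -> T -> int) : lab x y != -1 -> PPartition le lab (fw x y).
Proof.
move=> hl; split; [exact: fw_pos | exact: fw_mono|].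
move=> w v hwv hlab; apply: fw_strict (cov_lt hwv) _.
apply/negP => /andP[/eqP ew /eqP ev]; subst w v.
by rewrite hlab eqxx in hl.
Qed.

Lemma sw_PP (lab : T -> T -> int) : PPartition le lab (sw x y).
Proof.
split; [exact: sw_pos | | by move=> w v h _; apply: sw_strict (cov_lt h)].
move=> w v hwv; case: (eqVneq w v) => [->|nwv]; first by [].
have := sw_strict (w:=w) (v:=v); rewrite /Defs.ltP nwv hwv => /(_ isT); lia.
Qed.

End W.

End Aux.

Theorem proposition7p1 (T : finType) (le : rel T)
  (le_refl : reflexive le) (le_anti : antisymmetric le) (le_trans : transitive le)
  (omega : T -> nat) (omega_inj : injective omega)
  (omega_range : forall x, (1 <= omega x <= #|T|)%N) :
  let eps := eps_of omega in
  ((forall sigma, PPartition le eps sigma ->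
       PPartition le (neg_lab eps) (Phi le eps sigma))
   /\ (forall sigma1 sigma2, PPartition le eps sigma1 -> PPartition le eps sigma2 ->
         Phi le eps sigma1 =1 Phi le eps sigma2 -> sigma1 =1 sigma2)
   /\ (forall tau, PPartition le (neg_lab eps) tau ->
         exists2 sigma, PPartition le eps sigma & Phi le eps sigma =1 tau))
  <-> dual_consistent le eps.
Proof.
move=> eps.
have eps_val a b : eps a b = 1 \/ eps a b = -1.
  by rewrite /eps /eps_of; case: ifP; auto.
split.
- move=> [H1 [_ H3]]; apply: (@consistent_of_D _ _ le_refl le_trans).
  move=> a b hab.
  have lab := @cov_le _ _ _ _ hab.
  have hfe := @fw_eq _ _ le_refl le_trans _ _ hab.
  have hsxy := @sw_xy _ _ le_refl le_anti le_trans _ _ hab.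
  case: (eps_val a b) => he.
  + have PPf : PPartition le eps (fw le a b).
      by apply: (@fw_PP _ _ le_refl le_anti le_trans _ _ hab); rewrite he.
    have [_ _ Hs1] := H1 _ PPf.
    have h1 := Hs1 a b hab ltac:(by rewrite /neg_lab he).
    have PPs := @sw_PP _ _ le_refl le_anti le_trans _ _ hab (neg_lab eps).
    have [sig [_ Hm _] Hphi] := H3 _ PPs.
    have h2 := Hm a b lab.
    have ea := Hphi a; have eb := Hphi b.
    rewrite /Phi in h1 ea eb.
    lia.
  + have PPs := @sw_PP _ _ le_refl le_anti le_trans _ _ hab eps.
    have [_ Hm1 _] := H1 _ PPs.
    have h1 := Hm1 a b lab.
    have PPf : PPartition le (neg_lab eps) (fw le a b).
      by apply: (@fw_PP _ _ le_refl le_anti le_trans _ _ hab); rewrite /neg_lab he.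
    have [sig [_ _ Hs] Hphi] := H3 _ PPf.
    have h2 := Hs a b hab he.
    have ea := Hphi a; have eb := Hphi b.
    rewrite /Phi in h1 ea eb.
    lia.
- move=> Hc.
  have D := @D_of_consistent _ _ le_refl le_anti le_trans _ Hc.
  have Z := @delta_max _ le eps.
  split; [|split].
  + move=> sig [Hp Hm Hs].
    have Hcov a b : covers le a b -> Phi le eps sig b <= Phi le eps sig a.
      move=> hab; have := Hm a b (@cov_le _ _ _ _ hab); rewrite /Phi (D a b hab).
      case: (eps_val a b) => he; rewrite he; first lia.
      have := Hs a b hab he; lia.
    split.
    * apply: (@pos_of_covers _ _ le_refl le_anti le_trans) => // m hm.
      by rewrite /Phi Z // addr0.
    * exact: (@mono_of_covers _ _ le_refl le_anti le_trans).
    * move=> a b hab; rewrite /neg_lab /Phi (D a b hab) => he.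
      have he' : eps a b = 1 by lia.
      have := Hm a b (@cov_le _ _ _ _ hab); rewrite he'; lia.
  + by move=> s1 s2 _ _ H w; have := H w; rewrite /Phi => /addIr.
  + move=> tau [Hp Hm Hs].
    exists (fun w => tau w - delta le eps w); last by move=> w; rewrite /Phi subrK.
    have Hcov a b : covers le a b -> tau b - delta le eps b <= tau a - delta le eps a.
      move=> hab; have := Hm a b (@cov_le _ _ _ _ hab); rewrite (D a b hab).
      case: (eps_val a b) => he; rewrite he; last lia.
      have := Hs a b hab ltac:(by rewrite /neg_lab he); lia.
    split.
    * apply: (@pos_of_covers _ _ le_refl le_anti le_trans) => // m hm.
      by rewrite Z // subr0.
    * exact: (@mono_of_covers _ _ le_refl le_anti le_trans).
    * move=> a b hab he; have := Hm a b (@cov_le _ _ _ _ hab); rewrite (D a b hab) he.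
      lia.
Qed.
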